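(* Let $\Gamma=\{0=\rho_1<\rho_2<\cdots\}$ be an Arf numerical semigroup and $d_i=\rho_{i+1}-\rho_i$ for $i\ge1$. If $i\ge2$ and $d_i<d_{i-1}$, then \[ \mathrm{Ap}(\Gamma,-d_i)=\{\rho_1,\dots,\rho_{i-1}\}. \]
   Context: A numerical semigroup is a subset of $\mathbb N$ containing $0$, closed under addition, with finite complement; its elements listed increasingly are $\rho_1<\rho_2<\cdots$. $\Gamma$ is Arf if $\rho_i+\rho_j-\rho_k\in\Gamma$ for all $i\ge j\ge k$. For $x\in\mathbb Z$, $\mathrm{Ap}(\Gamma,x)=\{s\in\Gamma: s-x\notin\Gamma\}$. *)

(* Defs.v *)
From mathcomp Require Import all_boot all_algebra.
Set Implicit Arguments. Unset Strict Implicit. Unset Printing Implicit Defensive.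
Import GRing.Theory Num.Theory.

Definition numerical_semigroup (G : pred nat) : Prop :=
  [/\ G 0%N,
      (forall a b, G a -> G b -> G (a + b)%N)
    & exists N : nat, forall n, (N <= n)%N -> G n].

(* rho enumerates G increasingly, with paper indexing rho 1 < rho 2 < ... *)
Definition enumerates (G : pred nat) (rho : nat -> nat) : Prop :=
  (forall i j, (1 <= i)%N -> (i < j)%N -> (rho i < rho j)%N) /\
  (forall x, G x <-> exists2 i, (1 <= i)%N & rho i = x).

(* Arf: rho_i + rho_j - rho_k in G for all i >= j >= k >= 1
   (the subtraction is exact since rho_k <= rho_i). *)
Definition Arf (G : pred nat) (rho : nat -> nat) : Prop :=
  forall i j k, (1 <= k)%N -> (k <= j)%N -> (j <= i)%N ->
    G (rho i + rho j - rho k)%N.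

Definition memZ (G : pred nat) (z : int) : Prop :=
  exists2 n : nat, z = Posz n & G n.

Definition Apery (G : pred nat) (x : int) (s : nat) : Prop :=
  G s /\ ~ memZ G (Posz s - x)%R.

(* Main.v *)
Require Import Defs.
From mathcomp Require Import all_boot all_algebra.
From mathcomp Require Import zify.
Import GRing.Theory Num.Theory.

Lemma rho_lt_idx (rho : nat -> nat)
  (H : forall i j, (1 <= i)%N -> (i < j)%N -> (rho i < rho j)%N) a b :
  (1 <= a)%N -> (1 <= b)%N -> (rho a < rho b)%N -> (a < b)%N.
Proof.
move=> ha hb h; case: (ltnP a b) => // hba.
case: (ltngtP b a) hba => // [hlt|heq] _.
  have := H _ _ hb hlt; lia.
subst; lia.
Qed.

Lemma memZ_add (G : pred nat) s d :
  memZ G (Posz s - (- Posz d))%R <-> G (s + d)%N.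
Proof.
rewrite opprK; split.
  by case=> n; rewrite -PoszD => -[->].
by move=> h; exists (s + d)%N; rewrite ?PoszD.
Qed.

Theorem lemma3p3 (G : pred nat) (rho : nat -> nat)
  (HG : numerical_semigroup G) (Hrho : enumerates G rho) (HArf : Arf G rho)
  (i : nat) (Hi : (2 <= i)%N)
  (Hd : (rho i.+1 - rho i < rho i - rho i.-1)%N) :
  forall s : nat,
    Apery G (- Posz (rho i.+1 - rho i)%N)%R s <->
    exists j : nat, [/\ (1 <= j)%N, (j <= i.-1)%N & s = rho j].
Proof.
case: Hrho => Hmon Hmem.
have Hr1 : (rho i < rho i.+1)%N by apply: Hmon; lia.
have Hr0 : (rho i.-1 < rho i)%N by apply: Hmon; lia.
move=> s; rewrite /Apery memZ_add; split.
  case=> Gs Hn.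
  have [j j1 hjs] := (Hmem s).1 Gs; subst s.
  exists j; split => //.
  case: (leqP j i.-1) => // hj; exfalso; apply: Hn.
  case: (ltngtP j i) => [hl|hg|heq]; first lia; last subst j.
    have E : (rho j + (rho i.+1 - rho i) = rho j + rho i.+1 - rho i)%N by lia.
    by rewrite E; apply: HArf; lia.
  have -> : (rho i + (rho i.+1 - rho i) = rho i.+1)%N by lia.
  by apply/(Hmem _).2; exists i.+1.
case=> j [j1 jle ->]; split; first by apply/(Hmem _).2; exists j.
move=> Gx.
have [k k1 hk] := (Hmem _).1 Gx.
have hjk : (rho j < rho k)%N by lia.
have hji : (rho j <= rho i.-1)%N.
  case: (ltngtP j i.-1) jle => // [hl _|heq _]; last by rewrite heq.
  have := Hmon j i.-1 j1 hl; lia.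
have hki : (rho k < rho i)%N by lia.
have kle : (k < i)%N by apply: (@rho_lt_idx rho Hmon); lia.
have jk : (j < k)%N by apply: (@rho_lt_idx rho Hmon); lia.
have := HArf i.-1 k j j1 ltac:(lia) ltac:(lia).
move=> /(Hmem _).1 [m m1 hm].
have h1 : (rho i.-1 < rho m)%N by lia.
have h2 : (rho m < rho i)%N by lia.
have i1 : (0 < i.-1)%N by lia.
have := @rho_lt_idx rho Hmon _ _ i1 m1 h1.
have := @rho_lt_idx rho Hmon _ _ m1 (ltnW Hi) h2.
lia.
Qed.
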